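(* Let $H=(V,E)$ be a loopy graph with $|V|=5$ and $\mathrm{vm}(H)=4$. Then $|E|\le 10$.
   Context: A loopy graph is a finite graph with no isolated vertices and no multiple edges, possibly with loops (a loop counts as one edge). A matching is a set of pairwise vertex-disjoint edges, loops allowed; $\mathrm{vm}(H)$ is the maximum number of vertices touched by a matching of $H$. *)

(* Defs.v *)
From mathcomp Require Import all_boot.
Set Implicit Arguments. Unset Strict Implicit. Unset Printing Implicit Defensive.

(* A loopy graph on vertex set T (a finType) is given by its edge set
   E : {set {set T}}: each edge is a set of 1 vertex (a loop) or 2 vertices.
   No multiple edges is automatic (E is a set). *)
Definition loopy_graph (T : finType) (E : {set {set T}}) : Prop :=
  (forall e, e \in E -> #|e| = 1 \/ #|e| = 2) /\
  (forall v : T, exists2 e, e \in E & v \in e).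

Definition matching (T : finType) (E M : {set {set T}}) : bool :=
  (M \subset E) &&
  [forall e in M, forall f in M, (e != f) ==> [disjoint e & f]].

Definition vm (T : finType) (E : {set {set T}}) : nat :=
  \max_(M in powerset E | matching E M) #|cover M|.

(* Main.v *)
Require Import Defs.
From mathcomp Require Import all_boot.
Set Implicit Arguments. Unset Strict Implicit. Unset Printing Implicit Defensive.

Definition Pl : seq (nat * nat) :=
  [:: (0,0);(1,1);(2,2);(3,3);(4,4);(0,1);(0,2);(0,3);(0,4);
      (1,2);(1,3);(1,4);(2,3);(2,4);(3,4)].

Definition covers : seq (nat * nat * nat * nat * nat) :=
  [:: (0,1,2,3,4);(0,1,3,2,4);(0,1,4,2,3);
      (1,0,2,3,4);(1,0,3,2,4);(1,0,4,2,3);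
      (2,0,1,3,4);(2,0,3,1,4);(2,0,4,1,3);
      (3,0,1,2,4);(3,0,2,1,4);(3,0,4,1,2);
      (4,0,1,2,3);(4,0,2,1,3);(4,0,3,1,2)].

Definition pres (bs : seq bool) (a b : nat) :=
  nth false bs (index (minn a b, maxn a b) Pl).

Definition cov_ok (bs : seq bool) (c : nat * nat * nat * nat * nat) :=
  let '(a, b, c, d, e) := c in [&& pres bs a a, pres bs b c & pres bs d e].

Definition good bs := has (cov_ok bs) covers.

Fixpoint allbs n : seq (seq bool) :=
  if n is n'.+1 then [seq x :: l | x <- [:: true; false], l <- allbs n']
  else [:: [::]].

Lemma check_all : all (fun bs => (11 <= count id bs) ==> good bs) (allbs 15) = true.
Proof. vm_compute. reflexivity. Qed.

Lemma allbs_complete n bs : size bs = n -> bs \in allbs n.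
Proof.
elim: n bs => [|n IH] [|x bs] //= [Hs].
rewrite mem_cat cats0; case: x; apply/orP; [left|right]; apply: map_f; exact: IH.
Qed.

Lemma covers_ok : all (fun c : nat * nat * nat * nat * nat =>
   let '(a, b, c, d, e) := c in
   uniq [:: a; b; c; d; e] && all (fun x => x < 5) [:: a; b; c; d; e]) covers.
Proof. by []. Qed.

Lemma inPl a b : a < 5 -> b < 5 -> (minn a b, maxn a b) \in Pl.
Proof.
by case: a => [|[|[|[|[|a]]]]] // _; case: b => [|[|[|[|[|b]]]]].
Qed.

Lemma disj2 (T : finType) (u v w z : T) :
  u != w -> u != z -> v != w -> v != z -> [disjoint [set u; v] & [set w; z]].
Proof.
move=> h1 h2 h3 h4; rewrite -setI_eq0; apply/eqP/setP => x; rewrite !inE.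
apply/negbTE/negP => /andP[/orP[]/eqP-> /orP[]/eqP E]; subst;
  by rewrite ?eqxx in h1 h2 h3 h4.
Qed.

Theorem proposition5p7 (T : finType) (E : {set {set T}}) :
  loopy_graph E -> #|T| = 5 -> vm E = 4 -> #|E| <= 10.
Proof.
move=> [Hsz _] HT Hvm.
rewrite leqNgt; apply/negP => HE.
have [x0 _] : exists x : T, x \in T by apply/card_gt0P; rewrite HT.
set s := enum T.
have Hs : size s = 5 by rewrite -HT cardE.
pose h n := nth x0 s n.
have hsurj : forall x, exists2 i, i < 5 & h i = x.
  by move=> x; exists (index x s); [rewrite -Hs index_mem mem_enum | rewrite /h nth_index // mem_enum].
have hneq : forall i j, i < 5 -> j < 5 -> i != j -> h i != h j.
  move=> i j Hi Hj; apply: contra.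
  by rewrite /h nth_uniq ?Hs // enum_uniq.
pose es := [seq [set h p.1; h p.2] | p <- Pl].
pose bs := [seq e \in E | e <- es].
have Hbs : size bs = 15 by rewrite !size_map.
have Hpres : forall a b, a < 5 -> b < 5 -> pres bs a b = ([set h a; h b] \in E).
  move=> a b Ha Hb; rewrite /pres.
  have Hin := inPl Ha Hb.
  have Hidx : index (minn a b, maxn a b) Pl < size Pl by rewrite index_mem.
  rewrite (nth_map set0) ?size_map // (nth_map (0,0)) // nth_index //=.
  case: (leqP a b) => Hab /=.
    by rewrite ?(minn_idPl Hab) ?(maxn_idPr Hab).
  by rewrite ?(minn_idPr (ltnW Hab)) ?(maxn_idPl (ltnW Hab)) setUC.
have Hcount : 11 <= count id bs.
  rewrite count_map.
  apply: leq_trans HE _.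
  rewrite cardE -size_filter.
  apply: uniq_leq_size; first exact: enum_uniq.
  move=> e; rewrite mem_enum => He.
  rewrite mem_filter /= He /=.
  have Hpair : exists x y, e = [set x; y].
    case: (Hsz e He) => /eqP.
      by case/cards1P => x ->; exists x, x; rewrite setUid.
    by case/cards2P => x [y [_ ->]]; exists x, y.
  case: Hpair => x [y ->].
  case: (hsurj x) => i Hi <-; case: (hsurj y) => j Hj <-.
  apply/mapP; exists (minn i j, maxn i j); first exact: inPl.
  case: (leqP i j) => Hij /=.
    by rewrite ?(minn_idPl Hij) ?(maxn_idPr Hij).
  by rewrite ?(minn_idPr (ltnW Hij)) ?(maxn_idPl (ltnW Hij)) setUC.
have := allP check_all bs (allbs_complete Hbs).
rewrite Hcount /= /good => /hasP [[[[[a b] c] d] e] Hc].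
have := allP covers_ok _ Hc => /= /andP[Huniq Hlt].
move: Hlt; rewrite /= !andbT => /and5P[Ha Hb Hc' Hd He'].
rewrite /cov_ok !Hpres // => /and3P[E1 E2 E3].
pose M := [set [set h a; h a]; [set h b; h c]; [set h d; h e]].
move: Huniq; rewrite /= !inE !negb_or !andbT => /and4P[/and4P[ab ac ad ae] /and3P[bc bd be] /andP[cd ce] de].
have Hmatch : matching E M.
  apply/andP; split.
    by apply/subsetP => x; rewrite !inE => /orP[/orP[]|]/eqP->.
  apply/forall_inP => x Hx; apply/forall_inP => y Hy; apply/implyP => Hxy.
  move: Hx Hy Hxy; rewrite !inE => /orP[/orP[]|]/eqP-> /orP[/orP[]|]/eqP-> //; rewrite ?eqxx //= => _;
  apply: disj2; apply: hneq => //; by rewrite // eq_sym.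
have Hcov : #|cover M| = 5.
  rewrite -HT -cardsT; suff -> : cover M = [set: T] by [].
  apply/setP => x; rewrite inE.
  case: (hsurj x) => i Hi <-.
  have Hl : i \in [:: a; b; c; d; e].
    have Hu : uniq [:: a; b; c; d; e].
      by rewrite /= !inE !negb_or ab ac ad ae bc bd be cd ce de.
    have Hsub : {subset [:: a; b; c; d; e] <= iota 0 5}.
      by move=> z; rewrite mem_iota /= !inE => /orP[|/orP[|/orP[|/orP[]]]]/eqP->.
    have [_ Heq] := uniq_min_size Hu Hsub (leqnn 5).
    by rewrite Heq mem_iota.
  apply/bigcupP.
  move: Hl; rewrite !inE => /orP[|/orP[|/orP[|/orP[]]]]/eqP->.
  - by exists [set h a; h a]; rewrite !inE ?eqxx.
  - by exists [set h b; h c]; rewrite !inE ?eqxx ?orbT.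
  - by exists [set h b; h c]; rewrite !inE ?eqxx ?orbT.
  - by exists [set h d; h e]; rewrite !inE ?eqxx ?orbT.
  - by exists [set h d; h e]; rewrite !inE ?eqxx ?orbT.
have : #|cover M| <= vm E.
  apply: (@leq_bigmax_cond _ (fun M => (M \in powerset E) && matching E M)).
  by rewrite Hmatch andbT powersetE; case/andP: Hmatch.
by rewrite Hcov Hvm.
Qed.
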